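(* Let $B \ge 1$ and let $|B| \ge 2$ be an even integer. Consider the busNNN architecture with $B$ buses, each attached to $|B|$ qubits, described in the context, with its $2B$ columns $0,1,\dots,2B-1$. Apply the following alternating sequence of swap layers, starting from the initial placement (time $0$): layer type $\mathcal{S}_0$, then $\mathcal{S}_1$, then $\mathcal{S}_0$, then $\mathcal{S}_1$, and so on, where - $\mathcal{S}_0$ (inter-bus layer) swaps, position-wise, the contents of column $2i+1$ with the contents of column $2i+2$ for every $i = 0,\dots,B-2$ (i.e. it swaps the qubit states across every point-to-point inter-bus edge); - $\mathcal{S}_1$ (intra-bus layer) swaps, position-wise, the contents of column $2i$ with the contents of column $2i+1$ for every $i = 0,\dots,B-2$ (i.e. on every bus except the last, $(B-1)$-th, bus). Say that full connectivity is reached after $L$ layers if for every pair of distinct logical qubits there is a time $t \in \{0,1,\dots,L\}$ (time $t$ being the placement after the first $t$ layers) at which the two qubits sit on qubit positions attached to a common bus. Then the smallest $L$ for which full connectivity is reached is exactly $$(4B-5)\left\lceil \frac{B}{B+1} \right\rceil,$$ i.e. $0$ if $B=1$ and $4B-5$ if $B \ge 2$.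
   Context: The busNNN (''bus next-nearest neighbor'') architecture with $B$ buses and bus size $|B|$ (an even integer) has $n = B|B|$ physical qubit positions. A bus is a hardware element attached to $|B|$ qubit positions that can apply a two-qubit gate between any two of the qubit positions attached to it. The $|B|$ positions attached to bus $i$ ($i = 0,\dots,B-1$) are split into two ''columns'' (half-buses) of $|B|/2$ positions each, labeled column $2i$ and column $2i+1$; within each column the positions are indexed $k = 0,\dots,|B|/2-1$. Adjacent buses are connected by point-to-point edges: for each $i = 0,\dots,B-2$ and each $k$, position $k$ of column $2i+1$ is coupled to position $k$ of column $2i+2$. A swap layer is a set of simultaneous SWAP operations on disjoint pairs of positions; ''swapping column $a$ with column $b$ position-wise'' means swapping, for every $k$, the state at position $k$ of column $a$ with the state at position $k$ of column $b$. Logical qubits are initially placed one per position. *)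

(* Defs.v *)
From mathcomp Require Import all_boot.
Set Implicit Arguments. Unset Strict Implicit. Unset Printing Implicit Defensive.

(* busNNN architecture with B buses, bus size nb (even).
   A qubit position is a pair (c, k) : column c (0 <= c < 2B), index
   k (0 <= k < nb/2) within the column.  Bus of column c is c / 2. *)
Definition pos := (nat * nat)%type.

Definition is_position (B nb : nat) (p : pos) : bool :=
  (p.1 < 2 * B) && (p.2 < nb %/ 2).

Definition bus (p : pos) : nat := p.1 %/ 2.

Definition S0col (B c : nat) : nat :=
  if odd c && (c + 3 <= 2 * B) then c.+1            (* c = 2i+1, i <= B-2 *)
  else if ~~ odd c && (2 <= c) && (c + 2 <= 2 * B) then c.-1 (* c = 2i+2 *)
  else c.

Definition S1col (B c : nat) : nat :=
  if ~~ odd c && (c + 4 <= 2 * B) then c.+1          (* c = 2i, i <= B-2 *)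
  else if odd c && (c + 3 <= 2 * B) then c.-1        (* c = 2i+1 *)
  else c.

Definition S0 (B : nat) (p : pos) : pos := (S0col B p.1, p.2).
Definition S1 (B : nat) (p : pos) : pos := (S1col B p.1, p.2).

Definition layer (B j : nat) : pos -> pos := if odd j then S1 B else S0 B.

Fixpoint place (B t : nat) (q : pos) : pos :=
  match t with
  | 0 => q
  | t'.+1 => layer B t' (place B t' q)
  end.

(* Full connectivity reached after L layers (logical qubits are identified
   with their initial positions). *)
Definition full_connectivity (B nb L : nat) : Prop :=
  forall q1 q2 : pos, is_position B nb q1 -> is_position B nb q2 -> q1 <> q2 ->
    exists t, t <= L /\ bus (place B t q1) = bus (place B t q2).

(* Main.v *)
Require Import Defs.
From mathcomp Require Import all_boot.
From mathcomp Require Import zify.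

Definition pf (B u : nat) := if u < 2*B-1 then u else 4*B-3-u.
Definition u0 (B c : nat) := if odd c then c else 4*B-3-c.

Ltac crush := repeat (match goal with |- context[if ?c then _ else _] =>
  lazymatch c with context[if _ then _ else _] => fail | _ => let E := fresh "E" in case E: c end end;
  cbv iota beta); try lia.

Lemma fixed_col B t k : 1 <= B -> place B t (2*B-1, k) = (2*B-1, k).
Proof.
move=> hB; elim: t => [|t IH] //=; rewrite IH /layer.
case: (odd t); rewrite /S0 /S1 /S0col /S1col /=; congr (_, _); crush.
Qed.

Lemma step B j u k : 1 <= B -> u < 4*B-2 -> odd (u + j) ->
  layer B j (pf B u, k) = (pf B (if u.+1 == 4*B-2 then 0 else u.+1), k).
Proof.
move=> hB hu ho; rewrite /layer.
case hj: (odd j); rewrite /S0 /S1 /S0col /S1col /pf /=; congr (_, _);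
  crush.
Qed.

Lemma mod2M u M : u < 2*M -> u %% M = if u < M then u else u - M.
Proof.
move=> h; case: ifP => h2; first by rewrite modn_small.
have -> : u = (u - M) + M by lia.
by rewrite modnDr modn_small; lia.
Qed.

Lemma place_mov B t c k : 1 <= B -> c < 2*B-1 ->
  place B t (c, k) = (pf B ((u0 B c + t) %% (4*B-2)), k).
Proof.
move=> hB hc; elim: t => [|t IH] /=.
  rewrite addn0 modn_small; last by rewrite /u0; crush.
  by rewrite /pf /u0; congr (_, _); crush.
rewrite IH step //; last first.
- rewrite oddD odd_mod; last by lia.
  rewrite oddD /u0; crush.
- by rewrite ltn_mod; lia.
congr (pf _ _, _).
have -> : u0 B c + t.+1 = (u0 B c + t) + 1 by lia.
rewrite -(modnDml (u0 B c + t) 1).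
have hlt : (u0 B c + t) %% (4*B-2) < 4*B-2 by rewrite ltn_mod; lia.
move: hlt; set x := (u0 B c + t) %% (4*B-2) => hlt.
case: eqP => h.
  by rewrite addn1 h modnn.
by rewrite modn_small; clear -hlt h; lia.
Qed.

Lemma u0_props B c : 1 <= B -> c < 2*B-1 -> odd (u0 B c) /\ u0 B c < 4*B-2.
Proof. move=> hB hc; rewrite /u0; crush. Qed.

Lemma exists_m B ua ub : 1 <= B -> odd ua -> odd ub -> ua < 4*B-2 -> ub < 4*B-2 ->
  exists m, m < 2*B-1 /\ (4*m + ua + ub = 2*(2*B-1) \/ 4*m + ua + ub = 4*(2*B-1)
     \/ 4*m + ua + ub = 6*(2*B-1)).
Proof.
move=> hB h1 h2 h3 h4.
case: (leqP (ua + ub) (2*(2*B-1))) => hs;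
case: (boolP ((ua+ub) %% 4 == 0)) => hm;
first [ by exists ((2*(2*B-1) - (ua+ub)) %/ 4); lia
      | by exists ((4*(2*B-1) - (ua+ub)) %/ 4); lia
      | by exists ((6*(2*B-1) - (ua+ub)) %/ 4); lia ].
Qed.

Theorem theorem3 (B nb : nat) :
  1 <= B -> 2 <= nb -> ~~ odd nb ->
  let Lmin := (if B == 1 then 0 else 4 * B - 5) in
  full_connectivity B nb Lmin /\
  (forall L, full_connectivity B nb L -> Lmin <= L).
Proof.
move=> hB hnb hodd Lmin; rewrite /Lmin.
case: eqP => hB1.
  split => // [[a k1] [b k2]] /= /andP [h1 _] /andP [h2 _] _.
  exists 0; split => //=; rewrite /bus /=; simpl in *; lia.
split.
- move=> [a k1] [b k2] /andP [/= ha _] /andP [/= hb _] _.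
  have hab : forall a b k1 k2, a < 2*B -> b = 2*B-1 ->
     exists t, t <= 4*B-5 /\ bus (place B t (a, k1)) = bus (place B t (b, k2)).
    move=> a' b' k1' k2' ha' ->.
    case: (eqVneq a' (2*B-1)) => [->|hne].
      by exists 0; split => //; lia.
    have hc : a' < 2*B-1 by lia.
    have [ho hu] := u0_props _ _ hB hc.
    set u := u0 B a' in ho hu.
    pose t := if u <= 2*B-1 then 2*B-1-u else if 6*B-3-u == 4*B-4 then 4*B-5 else 6*B-3-u.
    exists t; rewrite fixed_col // place_mov // /bus /= -/u.
    rewrite mod2M; last by rewrite /t; crush.
    rewrite /t /pf; split; crush.
  case: (eqVneq b (2*B-1)) => hb1; first exact: hab.
  case: (eqVneq a (2*B-1)) => ha1.
    have [t [ht e]] := hab b a k2 k1 hb ha1.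
    by exists t; split.
  have hca : a < 2*B-1 by lia.
  have hcb : b < 2*B-1 by lia.
  have [oa la] := u0_props _ _ hB hca.
  have [ob lb] := u0_props _ _ hB hcb.
  have [m [hm hmm]] := exists_m _ _ _ hB oa ob la lb.
  exists (if m == 0 then 0 else 2*m-1).
  rewrite !place_mov // /bus /=.
  rewrite (mod2M (u0 B a + _)); last by crush.
  rewrite (mod2M (u0 B b + _)); last by crush.
  rewrite /pf; split; crush.
- move=> L hfc; rewrite leqNgt; apply/negP => hL.
  have p1 : is_position B nb (2*B-4, 0) by rewrite /is_position /=; lia.
  have p2 : is_position B nb (2*B-1, 0) by rewrite /is_position /=; lia.
  have [|t [ht]] := hfc _ _ p1 p2; first by case; lia.
  rewrite fixed_col // place_mov; last by lia.
  rewrite /bus /= /u0.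
  have -> : odd (2*B-4) = false by lia.
  rewrite mod2M; last by lia.
  rewrite /pf; crush.
all: lia.
Qed.
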